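(* Let $k \in \mathbb{N}$ with $k > 3$. Then $$\max\left\{1, \left\lceil\frac{k}{4}\right\rceil - 1\right\} \leq q(k) < \begin{cases} \frac{k}{3} & \text{if } k \bmod 3 = 0,\\ \left\lceil\frac{k}{2}\right\rceil & \text{otherwise.}\end{cases}$$
   Context: For a graph $G$ with an edge-colouring $f\colon E(G)\to\{1,\dots,k\}$ and $1\le j\le k$: $e_j[v]$ is the number of edges coloured $j$ in the subgraph induced by the closed neighbourhood $N[v]$ of $v$, and $\deg_j(v)$ is the number of edges coloured $j$ incident to $v$. Given a strictly increasing sequence of positive integers $(a_1,\dots,a_k)$, a $d$-regular graph $G$ with $d=\sum_j a_j$ is an $(a_1,\dots,a_k)$-flip graph if there is an edge-colouring with colours $\{1,\dots,k\}$ such that $\deg_j(v)=a_j$ for all vertices $v$ and all $j$, and $e_k[v]<e_{k-1}[v]<\dots<e_1[v]$ for every vertex $v$; the sequence is then a $k$-flip sequence. For $k\ge 2$, call an index $q\in\{1,\dots,k-1\}$ admissible if there exists $h\in\mathbb{N}$ such that for every $N\in\mathbb{N}$ there is a $k$-flip sequence $(a_1,\dots,a_k)$ with $a_q=h$ and $a_k>N$. $q(k)$ denotes the largest admissible index (the upper bound asserts that every admissible index is below the stated value). *)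

(* Defs.v *)
From mathcomp Require Import all_boot all_order.
Set Implicit Arguments. Unset Strict Implicit. Unset Printing Implicit Defensive.

Definition simple_graph (T : finType) (e : rel T) : Prop :=
  (forall x, ~~ e x x) /\ (forall x y, e x y = e y x).

Definition cnbhd (T : finType) (e : rel T) (v : T) : {set T} :=
  [set u | (u == v) || e v u].

(* deg_j(v): number of edges coloured j incident to v.
   An edge colouring is a symmetric function c : T -> T -> nat (only its
   values on edges matter); colours are 1..k. *)
Definition degc (T : finType) (e : rel T) (c : T -> T -> nat) (j : nat) (v : T)
  : nat := #|[set u | e v u && (c v u == j)]|.

(* e_j[v]: number of edges coloured j in the subgraph induced by N[v].
   Ordered pairs are counted, hence the division by 2 (exact, since e is
   symmetric and irreflexive and c is symmetric). *)
Definition ecnt (T : finType) (e : rel T) (c : T -> T -> nat) (j : nat) (v : T)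
  : nat :=
  #|[set p : T * T | [&& p.1 \in cnbhd e v, p.2 \in cnbhd e v,
                        e p.1 p.2 & c p.1 p.2 == j]]| %/ 2.

(* Sequence (a_1,...,a_k) given as a : nat -> nat, indices 1..k relevant. *)
Definition incr_pos_seq (k : nat) (a : nat -> nat) : Prop :=
  (forall j, 1 <= j <= k -> 0 < a j) /\
  (forall i j, 1 <= i -> i < j -> j <= k -> a i < a j).

Definition flip_graph (k : nat) (a : nat -> nat) (T : finType) (e : rel T) : Prop :=
  incr_pos_seq k a /\ simple_graph e /\
  (forall v, #|[set u | e v u]| = \sum_(1 <= j < k.+1) a j) /\
  exists c : T -> T -> nat,
    (forall x y, c x y = c y x) /\
    (forall x y, e x y -> 1 <= c x y <= k) /\
    (forall v j, 1 <= j <= k -> degc e c j v = a j) /\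
    (forall v i j, 1 <= i -> i < j -> j <= k -> ecnt e c j v < ecnt e c i v).

Definition flip_seq (k : nat) (a : nat -> nat) : Prop :=
  incr_pos_seq k a /\
  exists (T : finType) (e : rel T), 0 < #|T| /\ flip_graph k a e.

Definition admissible (k q : nat) : Prop :=
  1 <= q <= k.-1 /\
  exists h : nat, forall N : nat, exists a : nat -> nat,
    flip_seq k a /\ a q = h /\ N < a k.

(* Main.v *)
Require Import Defs.
From mathcomp Require Import all_boot all_order.
From mathcomp Require Import zify.
Set Implicit Arguments. Unset Strict Implicit. Unset Printing Implicit Defensive.

Definition pairset (T : finType) (e : rel T) (c : T -> T -> nat) (j : nat) (v : T)
  : {set T * T} :=
  [set p : T * T | [&& p.1 \in cnbhd e v, p.2 \in cnbhd e v,
                        e p.1 p.2 & c p.1 p.2 == j]].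

Lemma ecntE (T : finType) (e : rel T) c j v : ecnt e c j v = #|pairset e c j v| %/ 2.
Proof. by []. Qed.

Record cg := CG { cV : finType; cE : rel cV; cC : cV -> cV -> nat }.
Arguments cE : clear implicits. Arguments cC : clear implicits.

Record good (k : nat) (G : cg) (A E : nat -> nat) : Prop := Good {
  g_simple : simple_graph (cE G);
  g_csym : forall x y, cC G x y = cC G y x;
  g_range : forall x y, cE G x y -> 1 <= cC G x y <= k;
  g_deg : forall v, #|[set u | cE G v u]| = \sum_(1 <= j < k.+1) A j;
  g_degc : forall v j, degc (cE G) (cC G) j v = A j;
  g_pairs : forall v j, #|pairset (cE G) (cC G) j v| = (E j).*2;
  g_ne : 0 < #|cV G| }.

Definition cart (G1 G2 : cg) : cg :=
  @CG (cV G1 * cV G2)%type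
    (fun x y => (cE G1 x.1 y.1 && (x.2 == y.2)) || ((x.1 == y.1) && cE G2 x.2 y.2))
    (fun x y => if x.2 == y.2 then cC G1 x.1 y.1 else cC G2 x.2 y.2).

Lemma set_andT (T : finType) (P : pred T) : [set u | P u && true] = [set u | P u].
Proof. by apply/setP => u; rewrite !inE andbT. Qed.

Section Cart.
Variables (k : nat) (G1 G2 : cg) (A1 E1 A2 E2 : nat -> nat).
Hypotheses (H1 : good k G1 A1 E1) (H2 : good k G2 A2 E2).

Let irr1 x : cE G1 x x = false. Proof. by apply/negbTE; case: (g_simple H1). Qed.
Let irr2 x : cE G2 x x = false. Proof. by apply/negbTE; case: (g_simple H2). Qed.
Let sym1 x y : cE G1 x y = cE G1 y x. Proof. by case: (g_simple H1). Qed.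
Let sym2 x y : cE G2 x y = cE G2 y x. Proof. by case: (g_simple H2). Qed.

Lemma cart_nbr (v : cV (cart G1 G2)) (P : nat -> bool) :
  [set u | cE (cart G1 G2) v u && P (cC (cart G1 G2) v u)] =
  ((fun u1 => (u1, v.2)) @: [set u1 | cE G1 v.1 u1 && P (cC G1 v.1 u1)]) :|:
  ((fun u2 => (v.1, u2)) @: [set u2 | cE G2 v.2 u2 && P (cC G2 v.2 u2)]).
Proof.
case: v => v1 v2; apply/setP => -[u1 u2] /=; rewrite !inE /=.
apply/idP/idP.
- case/andP => /orP [/andP [E /eqP <-] | /andP [/eqP <- E]].
    by rewrite eqxx => Pc; apply/orP; left; apply/imsetP; exists u1; rewrite ?inE ?E.
  rewrite (negbTE (_ : v2 != u2)); last by apply/eqP => e; move: E; rewrite e irr2.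
  by move=> Pc; apply/orP; right; apply/imsetP; exists u2; rewrite ?inE ?E.
- case/orP => /imsetP [w]; rewrite inE => /andP [E Pc] [-> ->] /=.
    by rewrite E eqxx.
  rewrite E eqxx orbT /=.
  by rewrite (negbTE (_ : v2 != w)) //; apply/eqP => e; move: E; rewrite e irr2.
Qed.

Lemma cart_nbr_card (v : cV (cart G1 G2)) (P : nat -> bool) :
  #|[set u | cE (cart G1 G2) v u && P (cC (cart G1 G2) v u)]| =
  #|[set u1 | cE G1 v.1 u1 && P (cC G1 v.1 u1)]| +
  #|[set u2 | cE G2 v.2 u2 && P (cC G2 v.2 u2)]|.
Proof.
rewrite cart_nbr cardsU.
rewrite (_ : _ :&: _ = set0); last first.
  apply/setP => -[a b]; rewrite !inE; apply/negbTE; apply/negP => /andP [].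
  case/imsetP => x; rewrite inE => /andP [E _] [-> ->].
  case/imsetP => y; rewrite inE => /andP [E' _] [ey _].
  by move: E; rewrite ey irr1.
rewrite cards0 subn0 !card_imset //.
- by move=> x y [].
- by move=> x y [].
Qed.


Lemma cart_cnbhd (v x : cV (cart G1 G2)) :
  (x \in cnbhd (cE (cart G1 G2)) v) =
  ((x.2 == v.2) && (x.1 \in cnbhd (cE G1) v.1)) ||
  ((x.1 == v.1) && (x.2 \in cnbhd (cE G2) v.2)).
Proof.
case: x v => [x1 x2] [v1 v2]; rewrite !inE /= xpair_eqE.
rewrite [v2 == x2]eq_sym [v1 == x1]eq_sym.
case: (x1 =P v1) => [->|n1]; case: (x2 =P v2) => [->|n2] /=;
  rewrite ?irr1 ?irr2 ?orbF ?andbF ?andbT ?orbT //.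
Qed.

Lemma cart_pairset (v : cV (cart G1 G2)) j :
  pairset (cE (cart G1 G2)) (cC (cart G1 G2)) j v =
  ((fun p => ((p.1, v.2), (p.2, v.2))) @: pairset (cE G1) (cC G1) j v.1) :|:
  ((fun p => ((v.1, p.1), (v.1, p.2))) @: pairset (cE G2) (cC G2) j v.2).
Proof.
case: v => v1 v2; apply/setP => -[[x1 x2] [y1 y2]].
rewrite in_setU inE /= !cart_cnbhd /=.
apply/idP/idP.
- case/and4P => Nx Ny /orP [/andP [E /eqP e2] | /andP [/eqP e1 E]].
  + subst y2; rewrite eqxx => Cj.
    have ex2 : x2 = v2.
      move: Nx Ny; case: (x2 =P v2) => // n2 /= /andP [/eqP ex1 _] /andP [/eqP ex _].
      by move: E; rewrite ex ex1 irr1.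
    subst x2; rewrite eqxx /= in Nx Ny.
    have {}Nx : x1 \in cnbhd (cE G1) v1.
      by case/orP: Nx => // /andP [/eqP -> _]; rewrite inE eqxx.
    have {}Ny : y1 \in cnbhd (cE G1) v1.
      by case/orP: Ny => // /andP [/eqP -> _]; rewrite inE eqxx.
    apply/orP; left; apply/imsetP; exists (x1, y1) => //.
    by rewrite inE /= Nx Ny E Cj.
  + subst y1; have n2 : x2 != y2 by apply/eqP => e; move: E; rewrite e irr2.
    rewrite (negbTE n2) => Cj.
    have ex1 : x1 = v1.
      move: Nx Ny; case: (x1 =P v1) => // n1 /=; rewrite ?orbF => /andP [/eqP ex _] /andP [/eqP ey _].
      by move: n2; rewrite ex ey eqxx.
    subst x1; move: Nx Ny; rewrite eqxx /= => /orP [/andP [/eqP ex _]|Nx].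
      subst x2; move=> /orP [/andP [/eqP ey _]|Ny]; first by move: n2; rewrite ey eqxx.
      by apply/orP; right; apply/imsetP; exists (v2, y2); rewrite // inE /= Ny E Cj !inE eqxx.
    move=> /orP [/andP [/eqP ey _]|Ny].
      by subst y2; apply/orP; right; apply/imsetP; exists (x2, v2); rewrite // inE /= Nx E Cj !inE eqxx.
    by apply/orP; right; apply/imsetP; exists (x2, y2); rewrite // inE /= Nx Ny E Cj.
- case/orP => /imsetP [[a b]]; rewrite inE /= => /and4P [Na Nb E Cj] [-> -> -> ->].
    by rewrite !eqxx Na Nb E Cj.
  have n : v2 != v2 -> False by rewrite eqxx.
  have nab : a != b by apply/eqP => e; move: E; rewrite e irr2.
  by rewrite !eqxx Na Nb E (negbTE nab) Cj !orbT.
Qed.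

Lemma cart_good : good k (cart G1 G2) (fun j => A1 j + A2 j) (fun j => E1 j + E2 j).
Proof.
split.
- split => [[x1 x2]|[x1 x2] [y1 y2]] /=; first by rewrite irr1 irr2 !andbF.
  by rewrite sym1 sym2 eq_sym [x1 == y1]eq_sym.
- move=> [x1 x2] [y1 y2] /=; rewrite eq_sym; case: ifP => _.
    exact: (g_csym H1). exact: (g_csym H2).
- move=> [x1 x2] [y1 y2] /= /orP [/andP [E /eqP <-]|/andP [/eqP <- E]].
    by rewrite eqxx; apply: (g_range H1).
  rewrite (negbTE (_ : x2 != y2)); last by apply/eqP => e; move: E; rewrite e irr2.
  exact: (g_range H2).
- move=> v; have := cart_nbr_card v (fun _ => true).
  rewrite !set_andT.
  by move=> ->; rewrite (g_deg H1) (g_deg H2) big_split.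
- move=> v j; rewrite /degc.
  by rewrite (cart_nbr_card v (fun c => c == j)) -!/(degc _ _ j _) (g_degc H1) (g_degc H2).
- move=> v j; rewrite cart_pairset cardsU.
  rewrite (_ : _ :&: _ = set0); last first.
    apply/setP => -[[a1 a2] [b1 b2]]; rewrite !inE; apply/negbTE; apply/negP => /andP [].
    case/imsetP => -[x y]; rewrite inE => /and4P [_ _ E _] [-> -> -> ->].
    case/imsetP => -[x' y'] _ [e1 _ e2 _].
    by move: E; rewrite e1 e2 irr1.
  rewrite cards0 subn0 !card_imset ?(g_pairs H1) ?(g_pairs H2) ?doubleD //.
  + by move=> [a b] [c d] [-> ->].
  + by move=> [a b] [c d] [-> ->].
- by rewrite card_prod muln_gt0 (g_ne H1) (g_ne H2).
Qed.

End Cart.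

Lemma good_ext k G A E A' E' : (forall j, A j = A' j) -> (forall j, E j = E' j) ->
  good k G A E -> good k G A' E'.
Proof.
move=> hA hE [s cs r d dc p ne]; split => //.
- by move=> v; rewrite d; apply: eq_bigr => j _.
- by move=> v j; rewrite dc.
- by move=> v j; rewrite p hE.
Qed.

Definition unitG : cg := @CG unit (fun _ _ => false) (fun _ _ => 0).

Lemma unit_good k : good k unitG (fun _ => 0) (fun _ => 0).
Proof.
split.
- by [].
- by [].
- by [].
- move=> v; rewrite big1 //.
  have -> : [set u | cE unitG v u] = set0 by apply/setP => u; rewrite !inE.
  by rewrite cards0.
- move=> v j; rewrite /degc.
  have -> : [set u | cE unitG v u && (cC unitG v u == j)] = set0 by apply/setP => u; rewrite !inE.
  by rewrite cards0.
- move=> v j.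
  have -> : pairset (cE unitG) (cC unitG) j v = set0 by apply/setP => u; rewrite !inE andbF.
  by rewrite cards0.
- by rewrite card_unit.
Qed.

Definition cbig (s : seq nat) (F : nat -> cg) : cg :=
  foldr (fun i G => cart (F i) G) unitG s.

Lemma cbig_good k (s : seq nat) (F : nat -> cg) (A E : nat -> nat -> nat) :
  (forall i, i \in s -> good k (F i) (A i) (E i)) ->
  good k (cbig s F) (fun j => \sum_(i <- s) A i j) (fun j => \sum_(i <- s) E i j).
Proof.
elim: s => [|i s IH] H.
  by apply: good_ext (unit_good k) => j; rewrite big_nil.
apply: good_ext (cart_good (H i (mem_head _ _)) (IH _)) => [j|j|]; rewrite ?big_cons //.
by move=> i' hi'; apply: H; rewrite in_cons hi' orbT.
Qed.

Lemma sum_ind (lo hi c x : nat) :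
  \sum_(lo <= j < hi) ((c == j) * x) = (lo <= c < hi) * x.
Proof.
elim: hi => [|hi IH]; first by rewrite big_geq // andbF.
case: (leqP lo hi) => h; last first.
  by rewrite big_geq // (_ : (lo <= c < hi.+1) = false) //; apply/negbTE; apply/negP => /andP [a b]; move: h; lia.
rewrite big_nat_recr //= IH.
case: (c =P hi) => [->|ne]; first by rewrite ltnn andbF leqnn h.
by rewrite mul0n addn0 ltnS (leq_eqVlt c) (_ : (c == hi) = false) //; apply/eqP.
Qed.

Definition clique (n c0 : nat) : cg := @CG 'I_n (fun x y => x != y) (fun _ _ => c0).

Lemma card_offdiag n : #|[set p : 'I_n * 'I_n | p.1 != p.2]| = n * n.-1.
Proof.
have := cardsC [set p : 'I_n * 'I_n | p.1 == p.2].
rewrite card_prod card_ord.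
have -> : ~: [set p : 'I_n * 'I_n | p.1 == p.2] = [set p | p.1 != p.2].
  by apply/setP => p; rewrite !inE.
have -> : [set p : 'I_n * 'I_n | p.1 == p.2] = [set (x, x) | x : 'I_n].
  apply/setP => -[a b]; rewrite !inE /=; apply/idP/idP => [/eqP <-|/imsetP [x _ [-> ->]]] //.
  by apply/imsetP; exists a.
rewrite card_imset ?card_ord; last by move=> x y [].
move=> h; rewrite -subn1 mulnBr muln1 -h addKn //.
Qed.

Lemma clique_good k n c0 En : 0 < n -> 1 <= c0 <= k -> En.*2 = n * n.-1 ->
  good k (clique n c0) (fun j => (c0 == j) * n.-1) (fun j => (c0 == j) * En).
Proof.
move=> n0 hc hE; split => //=.
- by split => [x|x y] /=; rewrite ?eqxx // eq_sym.
- move=> v; rewrite sum_ind hc mul1n (_ : [set u | v != u] = [set~ v]) ?cardsC1 ?card_ord //.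
  by apply/setP => u; rewrite !inE eq_sym.
- move=> v j; rewrite /degc; case: (c0 =P j) => [e|ne] /=.
    have -> : [set u | (v != u) && true] = [set~ v].
      by apply/setP => u; rewrite !inE andbT eq_sym.
    by rewrite cardsC1 card_ord mul1n.
  have -> : [set u | (v != u) && false] = set0 by apply/setP => u; rewrite !inE andbF.
  by rewrite cards0.
- move=> v j; case: (c0 =P j) => [e|ne] /=.
    rewrite mul1n hE -card_offdiag; apply: eq_card => p.
    by rewrite !inE e eqxx andbT !(eq_sym v) !orbN.
  have -> : pairset (cE (clique n c0)) (cC (clique n c0)) j v = set0.
    by apply/setP => u; rewrite !inE /= (_ : (c0 == j) = false) ?andbF //; apply/eqP.
  by rewrite cards0.
- by rewrite card_ord.
Qed.

Lemma card_pairs (A B : finType) (S : {set A * B}) :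
  #|S| = \sum_(a : A) #|[set b | (a, b) \in S]|.
Proof.
rewrite -sum1_card big_mkcond /=.
rewrite (eq_bigr (fun p => (fun a b => if (a, b) \in S then 1 else 0) p.1 p.2)); last by move=> [].
rewrite -(pair_bigA _ (fun a b => if (a, b) \in S then 1 else 0)) /=.
apply: (eq_bigr (fun a => #|[set b | (a, b) \in S]|)) => a _.
rewrite -sum1_card [RHS]big_mkcond /=.
by apply: eq_bigr => b _; rewrite inE.
Qed.


Section Line.
Variables (t kap lam : nat).
Definition LV := (bool * (('I_t * bool) * bool))%type.
Definition lineE (x y : LV) : bool :=
  (x.1 != y.1) || ((x.2.1.1 == y.2.1.1) && (x.2.1.2 != y.2.1.2)).
Definition lineC (x y : LV) : nat := if x.1 == y.1 then kap else lam.
Definition lineG : cg := @CG LV lineE lineC.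

Definition Own (v : LV) : {set LV} :=
  [set u | [&& u.1 == v.1, u.2.1.1 == v.2.1.1 & u.2.1.2 != v.2.1.2]].
Definition Oth (v : LV) : {set LV} := [set u | u.1 != v.1].

Lemma card_Own v : #|Own v| = 2.
Proof.
have -> : Own v = setX [set v.1] (setX (setX [set v.2.1.1] [set ~~ v.2.1.2]) setT).
  case: v => c0 [[s0 a0] b0]; apply/setP => -[c [[s a] b]]; rewrite !inE /=.
  by case: a; case: a0; rewrite ?andbT.
by rewrite !cardsX !cards1 cardsT card_bool.
Qed.

Lemma card_Oth v : #|Oth v| = 4 * t.
Proof.
have -> : Oth v = setX [set ~~ v.1] setT.
  case: v => c0 [[s0 a0] b0]; apply/setP => -[c [[s a] b]]; rewrite !inE /=.
  by case: c; case: c0; rewrite ?andbT.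
by rewrite !cardsX !cards1 cardsT !card_prod card_ord card_bool; lia.
Qed.

Lemma card_setb (T : finType) (A : {set T}) (b : bool) : #|[set u in A | b]| = b * #|A|.
Proof.
case: b; rewrite ?mul1n ?mul0n.
  by apply: eq_card => u; rewrite !inE andbT.
by rewrite (_ : [set u in A | false] = set0) ?cards0 //; apply/setP => u; rewrite !inE andbF.
Qed.

Lemma line_nbr v (P : nat -> bool) :
  [set u | lineE v u && P (lineC v u)] = [set u in Own v | P kap] :|: [set u in Oth v | P lam].
Proof.
case: v => c [[s a] b]; apply/setP => -[cx [[sx ax] bx]]; rewrite !inE /lineE /lineC /=.
rewrite [sx == s]eq_sym.
by case: c; case: cx; case: a; case: ax; rewrite /= ?andbF ?orbF ?andbT ?orbT.
Qed.

Lemma line_nbr_card v (P : nat -> bool) :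
  #|[set u | lineE v u && P (lineC v u)]| = P kap * 2 + P lam * (4 * t).
Proof.
rewrite line_nbr cardsU !card_setb card_Own card_Oth.
rewrite (_ : _ :&: _ = set0) ?cards0 ?subn0 //.
apply/setP => u; rewrite !inE; case: (u.1 == v.1); rewrite ?andbF //=.
Qed.


Definition Own' (v : LV) : {set LV} := v |: Own v.

Lemma card_Own' v : #|Own' v| = 3.
Proof. by rewrite cardsU1 card_Own !inE !eqxx. Qed.

Lemma inN v x : (x \in cnbhd lineE v) = (x \in Own' v) || (x \in Oth v).
Proof.
case: v => c [[s a] b]; case: x => cx [[sx ax] bx].
rewrite !inE /lineE /= [s == sx]eq_sym.
by case: c; case: cx; case: a; case: ax; rewrite /= ?andbF ?orbF ?andbT ?orbT.
Qed.

Definition Sx v (same : bool) : {set LV * LV} :=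
  [set p | [&& p.1 \in cnbhd lineE v, p.2 \in cnbhd lineE v, lineE p.1 p.2 &
              (p.1.1 == p.2.1) == same]].

Lemma line_pairset v j :
  pairset lineE lineC j v = [set p in Sx v true | kap == j] :|: [set p in Sx v false | lam == j].
Proof.
apply/setP => -[x y]; rewrite !inE /lineC /=.
by case: (x.1 == y.1); rewrite /= !andbA ?andbT ?andbF ?orbF.
Qed.

Lemma card_line_pairset v j :
  #|pairset lineE lineC j v| = (kap == j) * #|Sx v true| + (lam == j) * #|Sx v false|.
Proof.
rewrite line_pairset cardsU !card_setb.
rewrite (_ : _ :&: _ = set0) ?cards0 ?subn0 //.
apply/setP => -[x y]; rewrite !inE /=.
by case: (x.1 == y.1); rewrite /= ?andbF.
Qed.

Lemma Sx_cross v : Sx v false = setX (Own' v) (Oth v) :|: setX (Oth v) (Own' v).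
Proof.
apply/setP => -[x y]; rewrite /Sx [in LHS]in_set /= !inN.
case: v => c [[s a] b]; case: x => cx [[sx ax] bx]; case: y => cy [[sy ay] bz].
rewrite !inE /lineE /=.
by case: c; case: cx; case: cy; rewrite /= ?andbF ?orbF ?andbT ?orbT.
Qed.

Lemma card_Sx_cross v : #|Sx v false| = 24 * t.
Proof.
rewrite Sx_cross cardsU !cardsX card_Own' card_Oth.
rewrite (_ : _ :&: _ = set0) ?cards0 ?subn0; first lia.
apply/setP => -[x y]; rewrite !inE /=.
case: v => c [[s a] b]; case: x => cx [[sx ax] bx]; case: y => cy [[sy ay] bz] /=.
by case: c; case: cx; case: cy; rewrite /= ?andbF ?orbF ?andbT ?orbT.
Qed.


Definition SameOwn v : {set LV * LV} := setX [set v] (Own v) :|: setX (Own v) [set v].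
Definition SameOth v : {set LV * LV} :=
  [set p | [&& p.1 \in Oth v, p.2 \in Oth v & lineE p.1 p.2]].

Lemma Sx_same v : Sx v true = SameOwn v :|: SameOth v.
Proof.
apply/setP => -[x y]; rewrite /Sx [in LHS]in_set /= !inN.
case: v => c [[s a] b]; case: x => cx [[sx ax] bx]; case: y => cy [[sy ay] bz].
rewrite !inE /lineE /= !xpair_eqE /=.
case: (sx =P s) => [->|nx]; case: (sy =P s) => [->|ny]; rewrite ?eqxx;
by case: c; case: cx; case: cy; case: a; case: ax; case: ay; rewrite /= ?andbF ?orbF ?andbT ?orbT.
Qed.


End Line.


Section Line2.
Variables (t kap lam : nat).
Local Notation LV := (LV t).
Local Notation Own := (@Own t).
Local Notation Oth := (@Oth t).
Local Notation SameOwn := (@SameOwn t).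
Local Notation SameOth := (@SameOth t).
Local Notation lineE := (@lineE t).
Local Notation Sx := (@Sx t).

Lemma card_SameOwn v : #|SameOwn v| = 4.
Proof.
rewrite /SameOwn cardsU !cardsX cards1 card_Own.
rewrite (_ : _ :&: _ = set0) ?cards0 //.
apply/setP => -[x y]; rewrite !inE /=; apply/negbTE; apply/negP.
by case/andP => /andP [/eqP -> _] /andP []; rewrite !eqxx.
Qed.

Lemma card_SameOth v : #|SameOth v| = 8 * t.
Proof.
rewrite card_pairs (eq_bigr (fun x => (x \in Oth v) * 2)); last first.
  move=> x _; case hx: (x \in Oth v); last first.
    rewrite (_ : [set y | _] = set0) ?cards0 //.
    by apply/setP => y; rewrite in_set /SameOth in_set /= hx in_set0.
  rewrite -(card_Own x) mul1n; apply: eq_card => y.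
  move: hx; rewrite !inE /= /lineE => hx.
  case: x hx => cx [[sx ax] bx]; case: y => cy [[sy ay] bz]; case: v => c [[s a] b] /=.
  rewrite [sy == sx]eq_sym.
  by case: c; case: cx; case: cy; case: ax; case: ay; rewrite /= ?andbF ?orbF ?andbT ?orbT.
rewrite (eq_bigr (fun i => if i \in Oth v then 2 else 0)); last by move=> i _; case: (i \in Oth v).
rewrite -big_mkcond sum_nat_const card_Oth; lia.
Qed.

Lemma card_Sx_same v : #|Sx v true| = 8 * t + 4.
Proof.
rewrite Sx_same cardsU card_SameOwn card_SameOth.
rewrite (_ : _ :&: _ = set0) ?cards0; first lia.
apply/setP => -[x y]; rewrite !inE /=; apply/negbTE; apply/negP.
case/and4P => /orP [/and4P [/eqP -> _ _ _] | /andP [/and3P [h _ _] _]] hx _ _.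
  by rewrite eqxx in hx.
by rewrite h in hx.
Qed.

Lemma line_good k : 0 < t -> 1 <= kap <= k -> 1 <= lam <= k ->
  good k (lineG t kap lam) (fun j => (kap == j) * 2 + (lam == j) * (4 * t))
    (fun j => (kap == j) * (4 * t + 2) + (lam == j) * (12 * t)).
Proof.
move=> t0 hk hl; split => /=.
- split => [x|x y]; rewrite /lineE ?eqxx //= eq_sym; congr (_ || _).
  by rewrite eq_sym; congr (_ && _); rewrite eq_sym.
- by move=> x y; rewrite /lineC eq_sym.
- by move=> x y _; rewrite /lineC; case: ifP.
- move=> v; have -> : [set u | lineE v u] = [set u | lineE v u && true].
    by apply/setP => u; rewrite !inE andbT.
  have := line_nbr_card kap lam v (fun _ => true); move=> /= ->.
  by rewrite big_split /= !sum_ind hk hl.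
- by move=> v j; exact: (line_nbr_card kap lam v (fun c => c == j)).
- move=> v j; rewrite card_line_pairset card_Sx_same card_Sx_cross.
  by case: (kap == j); case: (lam == j); rewrite /=; lia.
- by rewrite !card_prod card_ord card_bool; lia.
Qed.

End Line2.


Lemma sum_const_iota n c : \sum_(i <- iota 0 n) c = n * c.
Proof. by rewrite big_const_seq count_predT size_iota iter_addn_0 mulnC. Qed.

Lemma sum_ind' (lo hi c x : nat) :
  \sum_(lo <= j < hi) ((j == c) * x) = (lo <= c < hi) * x.
Proof. rewrite -sum_ind; apply: eq_bigr => j _; by rewrite eq_sym. Qed.

Section Build.
Variables (k q t : nat).
Definition mult (c : nat) := if c <= q then 4 * (k - q) else k - 4 * q.

Definition linesG : cg :=
  cbig (index_iota q.+1 k.+1) (fun l => cbig (index_iota 1 k.+1)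
    (fun c => cbig (iota 0 (mult c)) (fun _ => lineG t c l))).
Definition cliquesG : cg :=
  cbig (index_iota 1 k.+1) (fun j => cart (cbig (iota 0 (5 * j)) (fun _ => clique 2 j))
                                          (cbig (iota 0 (2 * (k - j))) (fun _ => clique 3 j))).
Definition bigG := cart linesG cliquesG.

Definition LA j := \sum_(l <- index_iota q.+1 k.+1) \sum_(c <- index_iota 1 k.+1)
   \sum_(i <- iota 0 (mult c)) ((c == j) * 2 + (l == j) * (4 * t)).
Definition LE j := \sum_(l <- index_iota q.+1 k.+1) \sum_(c <- index_iota 1 k.+1)
   \sum_(i <- iota 0 (mult c)) ((c == j) * (4 * t + 2) + (l == j) * (12 * t)).
Definition CA j := \sum_(j' <- index_iota 1 k.+1)
   (\sum_(i <- iota 0 (5 * j')) ((j' == j) * 1) + \sum_(i <- iota 0 (2 * (k - j'))) ((j' == j) * 2)).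
Definition CE j := \sum_(j' <- index_iota 1 k.+1)
   (\sum_(i <- iota 0 (5 * j')) ((j' == j) * 1) + \sum_(i <- iota 0 (2 * (k - j'))) ((j' == j) * 3)).

Lemma bigG_good : 0 < t -> good k bigG (fun j => LA j + CA j) (fun j => LE j + CE j).
Proof.
move=> t0; apply: cart_good.
- apply: cbig_good => l; rewrite mem_index_iota => /andP [hl1 hl2].
  apply: cbig_good => c; rewrite mem_index_iota => /andP [hc1 hc2].
  apply: cbig_good => i _; apply: line_good => //; apply/andP; split => //; lia.
- apply: cbig_good => j; rewrite mem_index_iota => /andP [hj1 hj2].
  apply: good_ext (cart_good (cbig_good _) (cbig_good _)) => //.
  + by move=> i _; apply: clique_good => //; rewrite hj1 -ltnS.
  + by move=> i _; apply: clique_good => //; rewrite hj1 -ltnS.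
Qed.


Hypotheses (q1 : 1 <= q) (qk : 4 * q <= k).

Lemma Msum : \sum_(1 <= c < k.+1) mult c = k * (k - q).
Proof.
rewrite (big_cat_nat (n := q.+1)) //=; last lia.
rewrite (eq_big_nat _ _ (F2 := fun _ => 4 * (k - q))); last first.
  by move=> i /andP [_ hi]; rewrite /mult (_ : i <= q) //; lia.
rewrite [X in _ + X](eq_big_nat _ _ (F2 := fun _ => k - 4 * q)); last first.
  by move=> i /andP [hi _]; rewrite /mult (_ : i <= q = false) //; lia.
rewrite !sum_nat_const_nat.
have -> : k = 4 * q + (k - 4 * q) by lia.
set r := k - 4 * q.
have -> : 4 * q + r - q = 3 * q + r by lia.
have -> : q.+1 - 1 = q by lia.
have -> : (4 * q + r).+1 - q.+1 = 3 * q + r by lia.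
have -> : 4 * q + r - 4 * q = r by lia.
nia.
Qed.

Lemma mid_sum (l j : nat) (X Y : nat) : 1 <= j <= k ->
  \sum_(c <- index_iota 1 k.+1) \sum_(i <- iota 0 (mult c)) ((c == j) * X + (l == j) * Y)
  = mult j * X + k * (k - q) * ((l == j) * Y).
Proof.
move=> hj.
rewrite (eq_bigr (fun c => (c == j) * (mult j * X) + mult c * ((l == j) * Y))); last first.
  move=> c _; rewrite sum_const_iota mulnDr; congr (_ + _).
  by case: (c =P j) => [->|_]; rewrite ?mul1n ?mul0n ?muln0.
rewrite big_split /= sum_ind' -big_distrl /= Msum.
by rewrite (_ : (1 <= j < k.+1) = true) ?mul1n //; lia.
Qed.

Lemma LA_closed j : 1 <= j <= k ->
  LA j = (k - q) * (mult j * 2) + (q < j) * (k * (k - q) * (4 * t)).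
Proof.
move=> hj; rewrite /LA (eq_bigr _ (fun l _ => mid_sum l 2 (4 * t) hj)).
rewrite big_split /= sum_nat_const_nat.
rewrite (eq_bigr (fun l => (l == j) * (k * (k - q) * (4 * t)))); last first.
  by move=> l _; case: (l == j); rewrite ?mul1n ?mul0n ?muln0.
rewrite sum_ind' (_ : (q < j < k.+1) = (q < j)); first by congr (_ + _); lia.
by case: (q < j) => //=; lia.
Qed.

Lemma LE_closed j : 1 <= j <= k ->
  LE j = (k - q) * (mult j * (4 * t + 2)) + (q < j) * (k * (k - q) * (12 * t)).
Proof.
move=> hj; rewrite /LE (eq_bigr _ (fun l _ => mid_sum l (4 * t + 2) (12 * t) hj)).
rewrite big_split /= sum_nat_const_nat.
rewrite (eq_bigr (fun l => (l == j) * (k * (k - q) * (12 * t)))); last first.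
  by move=> l _; case: (l == j); rewrite ?mul1n ?mul0n ?muln0.
rewrite sum_ind' (_ : (q < j < k.+1) = (q < j)); first by congr (_ + _); lia.
by case: (q < j) => //=; lia.
Qed.

Lemma C_closed j (X Y : nat) : 1 <= j <= k ->
  \sum_(j' <- index_iota 1 k.+1)
   (\sum_(i <- iota 0 (5 * j')) ((j' == j) * X) + \sum_(i <- iota 0 (2 * (k - j'))) ((j' == j) * Y))
  = 5 * j * X + 2 * (k - j) * Y.
Proof.
move=> hj.
rewrite (eq_bigr (fun j' => (j' == j) * (5 * j * X + 2 * (k - j) * Y))); last first.
  move=> j' _; rewrite !sum_const_iota.
  by case: (j' =P j) => [->|_]; rewrite ?mul1n ?mul0n ?muln0.
by rewrite sum_ind' (_ : (1 <= j < k.+1) = true) ?mul1n //; lia.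
Qed.

End Build.


Lemma good_flip k G A E :
  good k G A E -> incr_pos_seq k A ->
  (forall i j, 1 <= i -> i < j -> j <= k -> E j < E i) ->
  flip_seq k A.
Proof.
move=> gG hA hE; split => //; exists (cV G), (cE G); split; first exact: g_ne gG.
split => //; split; first exact: g_simple gG.
split; first exact: g_deg gG.
exists (cC G); split; first exact: g_csym gG.
split; first exact: g_range gG.
split; first by move=> v j _; exact: (g_degc gG v j).
move=> v i j hi hij hj; rewrite /ecnt -/(pairset _ _ _ _) -/(pairset _ _ _ _).
by rewrite !(g_pairs gG) -!muln2 !mulnK //; apply: hE.
Qed.

Lemma lower_adm k : 3 < k -> admissible k (k %/ 4).
Proof.
move=> hk; set q := k %/ 4.
have q1 : 1 <= q by rewrite /q; lia.
have qk : 4 * q <= k by rewrite /q; lia.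
set r := k - 4 * q.
have kq : k - q = 3 * q + r by rewrite /r; lia.
have kr : k = 4 * q + r by rewrite /r; lia.
have k4 : k - 4 * q = r by [].
clearbody r q.
split; first by apply/andP; split => //; lia.
exists ((k - q) * (4 * (k - q) * 2) + (5 * q * 1 + 2 * (k - q) * 2)) => N.
set t := N.+2.
have t0 : 0 < t by [].
have t2 : N.+2 <= t by [].
clearbody t.
have gG := bigG_good k q t0.
have aE j : 1 <= j <= k -> LA k q t j + CA k j =
   (3 * q + r) * ((if j <= q then 4 * (3 * q + r) else r) * 2) + (q < j) * (k * (3 * q + r) * (4 * t))
     + (5 * j * 1 + 2 * (k - j) * 2).
  by move=> hj; rewrite LA_closed // /CA C_closed // /mult kq k4.
have eE j : 1 <= j <= k -> LE k q t j + CE k j =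
   (3 * q + r) * ((if j <= q then 4 * (3 * q + r) else r) * (4 * t + 2)) + (q < j) * (k * (3 * q + r) * (12 * t))
     + (5 * j * 1 + 2 * (k - j) * 3).
  by move=> hj; rewrite LE_closed // /CE C_closed // /mult kq k4.
have hinc : incr_pos_seq k (fun j => LA k q t j + CA k j).
  split.
    move=> j hj; rewrite aE //.
    by move: ((3 * q + r) * _) ((q < j) * _) => X Y; lia.
  move=> i j hi hij hj.
  have hi' : 1 <= i <= k by lia.
  have hj' : 1 <= j <= k by lia.
  rewrite !aE //.
  case: (leqP j q) => hjq.
    rewrite (_ : i <= q); last by lia.
    rewrite (_ : q < i = false); last by lia.
    rewrite /=.
    by move: ((3 * q + r) * _) => X; lia.
  case: (leqP i q) => hiq /=.
    have P1 : (3 * q + r) * (4 * (3 * q + r) * 2) <= k * (3 * q + r) * (4 * t).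
      apply: (@leq_trans ((3 * q + r) * (k * (4 * t)))).
        by rewrite leq_mul2l; apply/orP; right; rewrite kr; nia.
      by rewrite mulnA (mulnC (3 * q + r)).
    rewrite mul1n mul0n addn0.
    move: P1; move: ((3 * q + r) * (4 * (3 * q + r) * 2)) (k * (3 * q + r) * (4 * t)) ((3 * q + r) * (r * 2)) => X Y Z.
    lia.
  rewrite !mul1n; move: ((3 * q + r) * (r * 2)) (k * (3 * q + r) * (4 * t)) => X Y; lia.
exists (fun j => LA k q t j + CA k j); split; last split.
- apply: good_flip gG hinc _ => i j hi hij hj.
  have hi' : 1 <= i <= k by lia.
  have hj' : 1 <= j <= k by lia.
  rewrite !eE //.
  case: (leqP j q) => hjq.
    rewrite (_ : i <= q); last by lia.
    rewrite (_ : q < i = false); last by lia.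
    rewrite /=.
    by move: ((3 * q + r) * _) => X; lia.
  case: (leqP i q) => hiq /=.
    have K1 : r * (4 * t + 2) + k * (12 * t) <= 4 * (3 * q + r) * (4 * t + 2).
      rewrite kr; nia.
    have K2 : (3 * q + r) * (r * (4 * t + 2)) + k * (3 * q + r) * (12 * t)
              <= (3 * q + r) * (4 * (3 * q + r) * (4 * t + 2)).
      have -> : (3 * q + r) * (r * (4 * t + 2)) + k * (3 * q + r) * (12 * t) =
                (3 * q + r) * (r * (4 * t + 2) + k * (12 * t)) by lia.
      by rewrite leq_mul2l K1 orbT.
    rewrite mul1n mul0n addn0.
    move: K2; move: ((3 * q + r) * (r * (4 * t + 2))) (k * (3 * q + r) * (12 * t)) ((3 * q + r) * (4 * (3 * q + r) * (4 * t + 2))) => X Y Z.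
    lia.
  rewrite !mul1n; move: ((3 * q + r) * (r * (4 * t + 2))) (k * (3 * q + r) * (12 * t)) => X Y; lia.
- rewrite aE ?ltnn /=; last lia.
  rewrite leqnn kq mul0n addn0; congr (_ + _); lia.
- rewrite aE; last lia.
  rewrite (_ : q < k) //=; last lia.
  rewrite (_ : k <= q = false) /=; last lia.
  have P : 1 <= k * (3 * q + r) by rewrite muln_gt0; apply/andP; split; lia.
  have P2 : 4 * t <= k * (3 * q + r) * (4 * t) by rewrite leq_pmull.
  rewrite mul1n; move: P2; move: (k * (3 * q + r) * (4 * t)) ((3 * q + r) * (r * 2)) => X Y.
  lia.
Qed.


Lemma card_U_le (T : finType) (A B : {set T}) : #|A :|: B| <= #|A| + #|B|.
Proof. by rewrite cardsU leq_subr. Qed.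

Lemma card_U_disj (T : finType) (A B : {set T}) :
  (forall x, x \in A -> x \in B -> False) -> #|A :|: B| = #|A| + #|B|.
Proof.
move=> H; rewrite cardsU (_ : A :&: B = set0) ?cards0 ?subn0 //.
apply/setP => x; rewrite !inE; apply/negbTE/negP => /andP [] /H h /h [].
Qed.

Lemma card_part (T : finType) (X : {set T}) (f : T -> nat) lo hi : lo <= hi ->
  #|[set x in X | lo <= f x < hi]| = \sum_(lo <= j < hi) #|[set x in X | f x == j]|.
Proof.
elim: hi => [|hi IH] h.
  rewrite big_geq // (_ : [set x in X | _] = set0) ?cards0 //.
  by apply/setP => x; rewrite !inE ltn0 andbF andbF.
case: (leqP lo hi) => h'; last first.
  have -> : lo = hi.+1 by lia.
  rewrite big_geq // (_ : [set x in X | _] = set0) ?cards0 //.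
  by apply/setP => x; rewrite !inE; apply/negbTE/negP => /and3P [_ a b]; lia.
rewrite big_nat_recr //= -IH //.
rewrite -card_U_disj; last first.
  by move=> x; rewrite !inE => /and3P [_ _ a] /andP [_ /eqP b]; lia.
apply: eq_card => x; rewrite !inE.
case: (x \in X) => //=; case: (f x =P hi) => [->|n]; first by rewrite h' ltnSn orbT.
by rewrite orbF ltnS (leq_eqVlt (f x)) (_ : (f x == hi) = false) //; apply/eqP.
Qed.

Section Upper.
Variables (T : finType) (e : rel T) (c : T -> T -> nat) (k q : nat) (a : nat -> nat).
Hypotheses (hs : simple_graph e) (hcs : forall x y, c x y = c y x)
  (hr : forall x y, e x y -> 1 <= c x y <= k)
  (hdeg : forall v j, 1 <= j <= k -> degc e c j v = a j)
  (hord : forall v i j, 1 <= i -> i < j -> j <= k -> ecnt e c j v < ecnt e c i v)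
  (hq1 : 1 <= q) (hqk : q < k) (h3 : k <= 3 * q).

Let irr x : e x x = false. Proof. by apply/negbTE; case: hs. Qed.
Let sym x y : e x y = e y x. Proof. by case: hs. Qed.

Definition pairsv v := [set p : T * T | [&& p.1 \in cnbhd e v, p.2 \in cnbhd e v & e p.1 p.2]].
Definition Smv v := [set p in pairsv v | c p.1 p.2 <= q].
Definition Lgv v := [set p in pairsv v | q < c p.1 p.2].
Local Notation PC j v := #|pairset e c j v|.

Lemma pairset_in v j : [set p in pairsv v | c p.1 p.2 == j] = pairset e c j v.
Proof. by apply/setP => p; rewrite !inE -!andbA. Qed.

Lemma Smv_sum v : #|Smv v| = \sum_(1 <= j < q.+1) PC j v.
Proof.
under eq_bigr => j _ do rewrite -pairset_in.
rewrite -card_part //.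
apply: eq_card => p; rewrite !inE ltnS.
case E: (e p.1 p.2); last by rewrite !andbF.
by have /andP [-> _] := hr E; rewrite /= !andbT.
Qed.

Lemma Lgv_sum v : #|Lgv v| = \sum_(q.+1 <= j < k.+1) PC j v.
Proof.
under eq_bigr => j _ do rewrite -pairset_in.
rewrite -card_part; last by lia.
apply: eq_card => p; rewrite !inE ltnS.
case E: (e p.1 p.2); last by rewrite !andbF.
by have /andP [_ ->] := hr E; rewrite /= !andbT.
Qed.

Definition S := \sum_(1 <= j < q.+1) a j.

Lemma small_nbrs v : #|[set y | e v y && (c v y <= q)]| = S.
Proof.
rewrite /S (eq_big_nat _ _ (F2 := fun j => #|[set y in [set y | e v y] | c v y == j]|)); last first.
  move=> j hj; rewrite -(hdeg v); last by move: hj; lia.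
  by rewrite /degc; apply: eq_card => y; rewrite !inE.
rewrite -card_part //; apply: eq_card => y; rewrite !inE ltnS.
case E: (e v y) => //=; have := hr E; case/andP => -> _; by [].
Qed.

Lemma PC_le v j : q < j <= k -> PC j v <= PC q v.
Proof.
move=> /andP [h1 h2]; rewrite leqNgt; apply/negP => H.
have := hord v (i := q) (j := j) hq1 h1 h2; rewrite !ecntE.
by rewrite ltnNge leq_div2r // ltnW.
Qed.

Lemma PC_ge v j : 1 <= j <= q -> PC q v <= PC j v.
Proof.
move=> /andP [h1 h2]; case: (ltngtP j q) => [h|h|->] //; last by lia.
rewrite leqNgt; apply/negP => H.
have := hord v (i := j) (j := q) h1 h (ltnW hqk); rewrite !ecntE.
by rewrite ltnNge leq_div2r // ltnW.
Qed.

Lemma Lg_le_Sm v : #|Lgv v| <= 2 * #|Smv v|.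
Proof.
have h1 : #|Lgv v| <= (k - q) * PC q v.
  rewrite Lgv_sum (_ : k - q = k.+1 - q.+1); last by rewrite subSS.
  rewrite -sum_nat_const_nat.
  rewrite big_nat_cond [X in _ <= X]big_nat_cond; apply: leq_sum => j /andP [hj _].
  by apply: PC_le; move: hj; lia.
have h2 : q * PC q v <= #|Smv v|.
  rewrite Smv_sum [q in q * _](_ : q = q.+1 - 1); last by rewrite subn1.
  rewrite -sum_nat_const_nat.
  rewrite big_nat_cond [X in _ <= X]big_nat_cond; apply: leq_sum => j /andP [hj _].
  by apply: PC_ge; move: hj; lia.
have h4 : k - q <= 2 * q by lia.
rewrite -(leq_pmul2l hq1).
apply: (@leq_trans (q * ((k - q) * PC q v))); first by rewrite leq_mul2l h1 orbT.
rewrite mulnCA.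
apply: (@leq_trans ((k - q) * #|Smv v|)); first by rewrite leq_mul2l h2 orbT.
by rewrite mulnA leq_mul2r (mulnC q) h4 orbT.
Qed.


Local Notation Tr := (T * (T * T))%type.
Definition sm x y := e x y && (c x y <= q).
Definition SmT := [set w : Tr | w.2 \in Smv w.1].
Definition LgT := [set w : Tr | w.2 \in Lgv w.1].
Definition Aset := [set w : Tr | [&& e w.1 w.2.1, e w.1 w.2.2, sm w.2.1 w.2.2,
                                   q < c w.1 w.2.1 & q < c w.1 w.2.2]].
Definition X0 := [set w : Tr | (w.2.1 == w.1) && sm w.1 w.2.2].
Definition X0' := [set w : Tr | (w.2.2 == w.1) && sm w.1 w.2.1].
Definition X1 := [set w : Tr | sm w.1 w.2.1 && sm w.2.1 w.2.2].
Definition X2 := [set w : Tr | sm w.1 w.2.2 && sm w.2.2 w.2.1].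
Definition Y0 := [set w : Tr | (w.2.1 == w.1) && (e w.1 w.2.2 && (c w.1 w.2.2 == k))].
Definition R1 := [set (w.2.2, (w.1, w.2.1)) | w in Aset].
Definition R2 := [set (w.2.1, (w.2.2, w.1)) | w in Aset].

Lemma sum_constT (n : nat) : \sum_(v : T) n = #|T| * n.
Proof. by rewrite sum_nat_const. Qed.

Lemma card_SmT : #|SmT| = \sum_v #|Smv v|.
Proof. by rewrite card_pairs; apply: eq_bigr => v _; apply: eq_card => p; rewrite !inE. Qed.

Lemma card_LgT : #|LgT| = \sum_v #|Lgv v|.
Proof. by rewrite card_pairs; apply: eq_bigr => v _; apply: eq_card => p; rewrite !inE. Qed.

Lemma small_nbrs' v : #|[set y | sm v y]| = S.
Proof. by rewrite -(small_nbrs v). Qed.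

Lemma card_X0 : #|X0| = #|T| * S.
Proof.
rewrite card_pairs -sum_constT; apply: eq_bigr => v _.
rewrite -(small_nbrs' v) -[#|[set y | sm v y]|]mul1n -(cards1 v) -cardsX.
by apply: eq_card => -[x y]; rewrite !inE.
Qed.

Lemma card_X0' : #|X0'| = #|T| * S.
Proof.
rewrite card_pairs -sum_constT; apply: eq_bigr => v _.
rewrite -(small_nbrs' v) -[#|[set y | sm v y]|]muln1 -(cards1 v) -cardsX.
by apply: eq_card => -[x y]; rewrite !inE andbC.
Qed.

Lemma card_X1 : #|X1| = #|T| * (S * S).
Proof.
rewrite card_pairs -sum_constT; apply: eq_bigr => v _.
rewrite card_pairs (eq_bigr (fun x => (sm v x) * S)); last first.
  move=> x _; case hx: (sm v x); rewrite ?mul1n ?mul0n.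
    by rewrite -(small_nbrs' x); apply: eq_card => y; rewrite !inE hx.
  by rewrite (_ : [set y | _] = set0) ?cards0 //; apply/setP => y; rewrite !inE hx.
rewrite -big_distrl /=; congr (_ * _).
rewrite -(small_nbrs' v) -sum1_card [RHS]big_mkcond /=.
by apply: eq_bigr => x _; rewrite inE; case: (sm v x).
Qed.

Lemma card_X2 : #|X2| = #|T| * (S * S).
Proof.
rewrite -card_X1 (_ : X2 = [set (w.1, (w.2.2, w.2.1)) | w in X1]).
  by rewrite card_imset // => -[v [x y]] [v' [x' y']] [-> -> ->].
apply/setP => -[v [x y]]; rewrite inE /=; apply/idP/imsetP => [h|[[v' [x' y']] h [-> -> ->]]].
  by exists (v, (y, x)); rewrite // inE.
by move: h; rewrite inE.
Qed.

Lemma card_Y0 : #|Y0| = #|T| * a k.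
Proof.
rewrite card_pairs -sum_constT; apply: eq_bigr => v _.
rewrite -(hdeg v (j := k)); last by apply/andP; split => //; lia.
rewrite -[degc _ _ _ _]mul1n -(cards1 v) /degc -cardsX.
by apply: eq_card => -[x y]; rewrite !inE.
Qed.

Lemma SmT_sub : SmT \subset X0 :|: X0' :|: X1 :|: X2 :|: Aset.
Proof.
apply/subsetP => -[v [x y]]; rewrite !inE /= /sm.
case/andP => /and3P [hx hy exy] cxy.
case: (x =P v) => [ex|nx].
  by subst x; rewrite exy cxy.
case: (y =P v) => [ey|ny].
  by subst y; rewrite hcs sym exy cxy.
move/eqP/negbTE: nx => nx; move/eqP/negbTE: ny => ny.
rewrite nx ny /= in hx hy; rewrite hx hy exy cxy /=.
case: (leqP (c v x) q) => [_|cx] //=.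
case: (leqP (c v y) q) => [_|cy] //=.
by rewrite [e y x]sym [c y x]hcs cxy exy.
Qed.

Lemma LgT_sup : Y0 :|: R1 :|: R2 \subset LgT.
Proof.
apply/subsetP => -[v [x y]]; rewrite !inE /=.
case/orP => [/orP [] |].
- case/andP => /eqP -> /andP [evy /eqP ->]; rewrite eqxx evy /= hqk !andbT.
  by rewrite orbT.
- case/imsetP => -[v' [x' y']]; rewrite inE /= /sm => /and5P [e1 e2 /andP [e3 c3] c1 c2] [-> -> ->].
  rewrite sym e2 sym e1 e3 c1 /=; by rewrite !orbT.
- case/imsetP => -[v' [x' y']]; rewrite inE /= /sm => /and5P [e1 e2 /andP [e3 c3] c1 c2] [-> -> ->].
  rewrite e3 sym e1 sym e2 hcs c2 /=; by rewrite !orbT.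
Qed.

Lemma card_LgT_ge : #|T| * a k + 2 * #|Aset| <= #|LgT|.
Proof.
apply: leq_trans (subset_leq_card LgT_sup).
have inj1 : injective (fun w : Tr => (w.2.2, (w.1, w.2.1))).
  by move=> [v [x y]] [v' [x' y']] [-> -> ->].
have inj2 : injective (fun w : Tr => (w.2.1, (w.2.2, w.1))).
  by move=> [v [x y]] [v' [x' y']] [-> -> ->].
rewrite card_U_disj; last first.
  move=> [v [x y]]; rewrite !inE /= => /orP [/andP [/eqP exv _]|].
    case/imsetP => -[v' [x' y']]; rewrite inE /= /sm => /and5P [_ _ /andP [e3 _] _ _] [ev ex ey].
    have ee : x' = y' by rewrite -ev -exv ex.
    by move: e3; rewrite ee irr.
  case/imsetP => -[v' [x' y']]; rewrite inE /= /sm => /and5P [_ _ /andP [_ c3] _ _] [ev ex ey].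
  case/imsetP => -[v'' [x'' y'']]; rewrite inE /= => /and5P [_ _ _ c1 _] [ev' ex' ey'].
  have e1 : x' = v'' by rewrite -ey ey'.
  have e2 : y' = x'' by rewrite -ev ev'.
  by move: c1; rewrite -e1 -e2 ltnNge c3.
rewrite card_U_disj; last first.
  move=> [v [x y]]; rewrite !inE /= => /andP [/eqP exv _].
  case/imsetP => -[v' [x' y']]; rewrite inE /= => /and5P [_ e2 _ _ _] [ev ex ey].
  have ee : v' = y' by rewrite -ex exv ev.
  by move: e2; rewrite ee irr.
by rewrite !card_imset // card_Y0 mul2n -addnn addnA.
Qed.

Lemma card_SmT_le : #|SmT| <= 2 * (#|T| * S) + 2 * (#|T| * (S * S)) + #|Aset|.
Proof.
have u1 := card_U_le X0 X0'; have u2 := card_U_le (X0 :|: X0') X1.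
have u3 := card_U_le (X0 :|: X0' :|: X1) X2; have u4 := card_U_le (X0 :|: X0' :|: X1 :|: X2) Aset.
have u5 := subset_leq_card SmT_sub.
rewrite card_X0 card_X0' in u1; rewrite card_X1 in u2; rewrite card_X2 in u3.
lia.
Qed.

Lemma upper_main : 0 < #|T| -> a k <= 4 * S + 4 * (S * S).
Proof.
move=> n0.
have H1 := card_LgT_ge.
have H2 : #|LgT| <= 2 * #|SmT|.
  rewrite card_LgT card_SmT big_distrr /=; apply: leq_sum => v _; exact: Lg_le_Sm.
have H3 := card_SmT_le.
have : #|T| * a k <= #|T| * (4 * S + 4 * (S * S)).
  move: H1 H2 H3; set n := #|T|; set A := #|Aset|; set L := #|LgT|; set M := #|SmT|.
  set x := n * a k; set y := n * S; set z := n * (S * S).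
  rewrite mulnDr !(mulnCA n 4) -/y -/z; lia.
by rewrite leq_pmul2l.
Qed.

End Upper.


Lemma upper_adm k q : 3 < k -> admissible k q -> 3 * q < k.
Proof.
move=> hk [/andP [q1 qk] [h hN]].
rewrite ltnNge; apply/negP => h3.
have qk' : q < k by lia.
have [a [[ha [T [e [n0 [_ [hs [_ [c [hcs [hr [hdeg hord]]]]]]]]]]] [aq ak]]] :=
  hN (4 * (q * h) + 4 * ((q * h) * (q * h))).
have := upper_main hs hcs hr hdeg hord q1 qk' h3 n0.
have hS : S q a <= q * h.
  rewrite /S -aq [q in q * _](_ : q = q.+1 - 1); last by rewrite subn1.
  rewrite -sum_nat_const_nat.
  rewrite big_nat_cond [X in _ <= X]big_nat_cond; apply: leq_sum => j /andP [hj _].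
  case: (ltngtP j q) => [lt|gt|->] //; last by move: hj; lia.
  by apply: ltnW; case: ha => _ H; apply: H => //; move: hj; lia.
move=> H; have : 4 * S q a + 4 * (S q a * S q a) <= 4 * (q * h) + 4 * (q * h * (q * h)).
  by apply: leq_add; rewrite leq_mul2l ?hS //=; apply: leq_mul.
lia.
Qed.

Theorem theorem4p1 (k : nat) (hk : 3 < k) :
  (exists q, admissible k q /\ maxn 1 ((k + 3) %/ 4 - 1) <= q) /\
  (forall q, admissible k q ->
     q < (if k %% 3 == 0 then k %/ 3 else (k + 1) %/ 2)).
Proof.
split.
  exists (k %/ 4); split; first exact: lower_adm.
  rewrite geq_max; apply/andP; split; lia.
move=> q hq; have := upper_adm hk hq.
case: ifP => /eqP H h; lia.
Qed.
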